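(* Let $\mathcal{A}$ be the cluster algebra of a seed pattern $t\mapsto(\mathbf{x}_t,B_t)$ on $\mathbb{T}_n$, and let $s\overset{k}{-}s'$ be an edge of $\mathbb{T}_n$. If $U\subseteq[\mathbf{x}_s]$ and $U\not\subseteq[\mathbf{x}_{s'}]$, then the Bongartz completion of $U$ with respect to $s'$ is $B_U(s')=[\mathbf{x}_s]$.
   Context: $\mathcal{F}=\mathbb{Q}(x_1,\dots,x_n)$. A labeled seed is a pair $(\mathbf{x},B)$ with $\mathbf{x}=(x_1,\dots,x_n)$ a free generating set of $\mathcal{F}$ and $B=(b_{ij})$ a skew-symmetrizable $n\times n$ integer matrix. Mutation $\mu_k$ gives $(\mathbf{x}',B')$ with $b'_{ij}=-b_{ij}$ if $i=k$ or $j=k$, and $b'_{ij}=b_{ij}+[b_{ik}]_+b_{kj}+b_{ik}[-b_{kj}]_+$ otherwise ($[b]_+=\max(b,0)$); $x'_j=x_j$ for $j\ne k$ and $x'_k=\big(\prod_i x_i^{[b_{ik}]_+}+\prod_i x_i^{[-b_{ik}]_+}\big)/x_k$. $\mathbb{T}_n$ is the $n$-regular tree with edges labeled $1,\dots,n$, the $n$ edges at each vertex having distinct labels; $t\overset{k}{-}t'$ denotes an edge labeled $k$. A seed pattern assigns a labeled seed $(\mathbf{x}_t,B_t)$, $\mathbf{x}_t=(x_{1;t},\dots,x_{n;t})$, $B_t=(b_{ij;t})$, to each $t\in\mathbb{T}_n$ such that seeds at the ends of an edge labeled $k$ are related by $\mu_k$; $\mathcal{A}$ is the $\mathbb{Q}$-algebra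 generated by all cluster variables. The non-labelled cluster is $[\mathbf{x}_t]=\{x_{1;t},\dots,x_{n;t}\}$. For a vertex $r$, the $c$-vectors $\mathbf{c}^{B_r;r}_{j;t}\in\mathbb{Z}^n$ are defined by $\mathbf{c}^{B_r;r}_{j;r}=\mathbf{e}_j$ and, for each edge $t\overset{k}{-}t'$: $\mathbf{c}^{B_r;r}_{k;t'}=-\mathbf{c}^{B_r;r}_{k;t}$ and $\mathbf{c}^{B_r;r}_{j;t'}=\mathbf{c}^{B_r;r}_{j;t}+[b_{kj;t}]_+\mathbf{c}^{B_r;r}_{k;t}+b_{kj;t}[-\mathbf{c}^{B_r;r}_{k;t}]_+$ for $j\ne k$ ($[\cdot]_+$ applied entrywise). For $U$ a subset of some non-labelled cluster and a vertex $r$, a Bongartz completion of $U$ with respect to $r$ is a non-labelled cluster $[\mathbf{x}_t]$ with $U\subseteq[\mathbf{x}_t]$ and $\mathbf{c}^{B_r;r}_{i;t}$ non-negative for every $i$ with $x_{i;t}\notin U$; it is known (Cao–Gyoda–Yurikusa) that it exists and is unique, and it is denoted $B_U(r)$. *)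

(* Defs.v *)
From HB Require Import structures.
From mathcomp Require Import all_boot all_order all_algebra.
From mathcomp Require Import fraction.
From mathcomp Require Import mpoly.
Set Implicit Arguments. Unset Strict Implicit. Unset Printing Implicit Defensive.
Import Order.TTheory GRing.Theory Num.Theory.
Local Open Scope ring_scope.

Definition ambient (n : nat) : fieldType := {fraction {mpoly rat[n]}}.

Definition gen (n : nat) (i : 'I_n) : ambient n := (tofrac ('X_i : {mpoly rat[n]})).

Definition pos (b : int) : int := Num.max b 0.

(* Vertices: reduced words over 'I_n (no two consecutive equal letters);
   the neighbour of w along the edge labelled k is w with its last letter
   removed if that letter is k, and  w ++ [k]  otherwise. *)
Definition reducedw (n : nat) (w : seq 'I_n) : bool := sorted (fun a b => a != b) w.

Definition stepw (n : nat) (w : seq 'I_n) (k : 'I_n) : seq 'I_n :=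
  if w is a :: w' then (if last a w' == k then belast a w' else rcons w k)
  else [:: k].

Lemma stepw_reduced (n : nat) (w : seq 'I_n) (k : 'I_n) :
  reducedw w -> reducedw (stepw w k).
Proof.
case: w => [|a w] //= Hw.
case: eqP => Hk.
  move: Hw; rewrite /reducedw -/(sorted _ (a :: w)) lastI.
  case: (belast a w) => [|b s] //=.
  by rewrite rcons_path => /andP[].
rewrite /reducedw /= rcons_path Hw /=.
by apply/eqP.
Qed.

Definition vertex (n : nat) := {w : seq 'I_n | reducedw w}.

Definition step (n : nat) (t : vertex n) (k : 'I_n) : vertex n :=
  exist _ (stepw (proj1_sig t) k) (stepw_reduced k (proj2_sig t)).

Definition edge (n : nat) (t : vertex n) (k : 'I_n) (t' : vertex n) : Prop :=
  t' = step t k.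

Definition skew_symmetrizable (n : nat) (B : 'M[int]_n) : Prop :=
  exists d : 'I_n -> int, (forall i, 0 < d i) /\
    (forall i j, d i * B i j = - (d j * B j i)).

(* x is a free generating set of F over Q: the Q-algebra map
   Q(x_1..x_n) -> F sending x_i to x i is an isomorphism. (Ring morphisms
   between fields of characteristic 0 are automatically Q-linear.) *)
Definition free_generating (n : nat) (x : 'I_n -> ambient n) : Prop :=
  exists f : {rmorphism ambient n -> ambient n},
    bijective f /\ forall i, f (gen i) = x i.

Definition labeled_seed (n : nat) (x : 'I_n -> ambient n) (B : 'M[int]_n) : Prop :=
  free_generating x /\ skew_symmetrizable B.

Definition mut_matrix (n : nat) (k : 'I_n) (B : 'M[int]_n) : 'M[int]_n :=
  \matrix_(i, j)
    (if (i == k) || (j == k) then - B i j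
     else B i j + pos (B i k) * B k j + B i k * pos (- B k j)).

Definition mut_cluster (n : nat) (k : 'I_n) (x : 'I_n -> ambient n) (B : 'M[int]_n)
  : 'I_n -> ambient n :=
  fun j => if j == k then
    ((\prod_i x i ^ pos (B i k)) + (\prod_i x i ^ pos (- B i k))) / x k
  else x j.

Definition seed_pattern (n : nat) (x : vertex n -> 'I_n -> ambient n)
  (B : vertex n -> 'M[int]_n) : Prop :=
  (forall t, labeled_seed (x t) (B t)) /\
  (forall t k t', edge t k t' ->
     x t' = mut_cluster k (x t) (B t) /\ B t' = mut_matrix k (B t)).

Definition cluster (n : nat) (x : vertex n -> 'I_n -> ambient n) (t : vertex n)
  : ambient n -> Prop := fun y => exists i, y = x t i.

Definition posv (n : nat) (c : 'rV[int]_n) : 'rV[int]_n := map_mx pos c.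

Definition cstep (n : nat) (Bt : 'M[int]_n) (k : 'I_n) (c : 'I_n -> 'rV[int]_n)
  : 'I_n -> 'rV[int]_n :=
  fun j => if j == k then - c k
           else c j + pos (Bt k j) *: c k + Bt k j *: posv (- c k).

Fixpoint cwalk (n : nat) (B : vertex n -> 'M[int]_n) (v : vertex n)
  (c : 'I_n -> 'rV[int]_n) (ks : seq 'I_n) : 'I_n -> 'rV[int]_n :=
  if ks is k :: ks' then cwalk B (step v k) (cstep (B v) k c) ks' else c.

(* c^{B_r;r}_{j;t}: computed along the walk from r to t that first goes from
   r down to the root [::] (labels rev r) and then up to t (labels t).
   Since the recursion is an involution along each edge, this agrees with
   the value along any walk, in particular the unique path from r to t. *)
Definition cvec (n : nat) (B : vertex n -> 'M[int]_n) (r t : vertex n) (j : 'I_n)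
  : 'rV[int]_n :=
  cwalk B r (fun i => delta_mx 0 i) (rev (proj1_sig r) ++ proj1_sig t) j.

Definition bongartz_completion (n : nat) (x : vertex n -> 'I_n -> ambient n)
  (B : vertex n -> 'M[int]_n) (U : ambient n -> Prop) (r : vertex n)
  (C : ambient n -> Prop) : Prop :=
  exists t : vertex n,
    (forall y, C y <-> cluster x t y) /\
    (forall u, U u -> cluster x t u) /\
    (forall i, ~ U (x t i) -> forall j, 0 <= cvec B r t i 0 j).

(* Main.v *)
Require Import Defs.
From HB Require Import structures.
From mathcomp Require Import all_boot all_order all_algebra.
From mathcomp Require Import zify ring.
Import Order.TTheory GRing.Theory Num.Theory.
Local Open Scope ring_scope.
Lemma pos_opp (x : int) : pos (- x) = pos x - x.
Proof. rewrite /pos. lia. Qed.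
Lemma pos_ge0 (x : int) : 0 <= pos x.
Proof. rewrite /pos. lia. Qed.
Lemma pos_npos (x : int) : x <= 0 -> pos x = 0.
Proof. rewrite /pos. lia. Qed.
From Stdlib Require Import FunctionalExtensionality Classical.

Section S.
Variable n : nat.
Implicit Types (p w : seq 'I_n) (k a : 'I_n).

Lemma stepw_rcons_k p k : stepw (rcons p k) k = p.
Proof. case: p => [|a p] /=; first by rewrite eqxx. by rewrite last_rcons eqxx belast_rcons. Qed.

Lemma stepw_step (v : vertex n) k : stepw (stepw (val v) k) k = val v.
Proof.
case: v => w /= Hw.
case/lastP: w Hw => [|p l] Hw /=; first by rewrite eqxx.
case: (eqVneq l k) Hw => [->|Hlk] Hw.
  rewrite stepw_rcons_k.
  case: p Hw => [|b p] //= Hw.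
  move: Hw; rewrite /reducedw /= rcons_path => /andP[_ H].
  by rewrite (negbTE H).
case: p Hw => [|b p] Hw /=.
  by rewrite (negbTE Hlk) -/(rcons [:: l] k) stepw_rcons_k.
rewrite last_rcons (negbTE Hlk) -rcons_cons.
by rewrite stepw_rcons_k.
Qed.

Lemma step_step (v : vertex n) k : step (step v k) k = v.
Proof. apply: val_inj => /=. exact: stepw_step. Qed.

Variable B : vertex n -> 'M[int]_n.

Lemma cwalk_cat v c l1 l2 :
  cwalk B v c (l1 ++ l2) = cwalk B (foldl (@step n) v l1) (cwalk B v c l1) l2.
Proof. by elim: l1 v c => [|k l IH] v c //=; rewrite IH. Qed.

Lemma cstep_inv (M : 'M[int]_n) k c :
  cstep (mut_matrix k M) k (cstep M k c) = c.
Proof.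
apply: functional_extensionality => j.
rewrite /cstep; case: (eqVneq j k) => [->|Hjk]; first by rewrite eqxx opprK.
rewrite eqxx opprK.
rewrite /mut_matrix mxE eqxx /=.
apply/matrixP => i l; rewrite !mxE.
rewrite !pos_opp. ring.
Qed.

Hypothesis HB : forall v k, B (step v k) = mut_matrix k (B v).

Lemma walk_back p : forall (v : vertex n), val v = p -> forall c,
  foldl (@step n) v (rev p ++ p) = v /\ cwalk B v c (rev p ++ p) = c.
Proof.
elim/last_ind: p => [|p a IH] v Hv c; first by [].
have Hvp : val (step v a) = p by rewrite /= Hv stepw_rcons_k.
have [IH1 IH2] := IH _ Hvp (cstep (B v) a c).
have -> : rev (rcons p a) ++ rcons p a = a :: ((rev p ++ p) ++ [:: a]).
  by rewrite rev_rcons -cats1 catA.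
rewrite /= cwalk_cat foldl_cat IH1 IH2 /= step_step; split => //.
by rewrite HB cstep_inv.
Qed.

End S.

Lemma cvec_edge (n : nat) (B : vertex n -> 'M[int]_n) (s s' : vertex n) k :
  (forall v k, B (step v k) = mut_matrix k (B v)) ->
  s' = step s k ->
  cvec B s' s = cstep (B s') k (fun i => delta_mx 0 i).
Proof.
move=> HB Hs'.
have Hs : s = step s' k by rewrite Hs' step_step.
rewrite /cvec.
set e := (fun i => delta_mx 0 i).
have [H1|H2] : val s' = rcons (val s) k \/ val s = rcons (val s') k.
  rewrite Hs' /=; case: (val s) => [|a w] /=; first by left.
  case: eqP => H; last by left.
  by right; rewrite lastI H.
- rewrite H1 rev_rcons /=.
  have <- : step s' k = s by rewrite Hs.
  have [_ ->] := @walk_back n B HB _ _ (erefl (val (step s' k))) (cstep (B s') k e).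
  by [].
- rewrite H2 -cats1 catA cwalk_cat.
  have [-> ->] := @walk_back n B HB _ _ (erefl (val s')) e.
  by [].
Qed.

Theorem lemma3p9 (n : nat) (x : vertex n -> 'I_n -> ambient n)
  (B : vertex n -> 'M[int]_n) (s s' : vertex n) (k : 'I_n)
  (U : ambient n -> Prop) :
  seed_pattern x B ->
  edge s k s' ->
  (forall u, U u -> cluster x s u) ->
  ~ (forall u, U u -> cluster x s' u) ->
  bongartz_completion x B U s' (cluster x s).
Proof.
move=> [_ Hsp] He HU HnU.
have HB : forall v k, B (step v k) = mut_matrix k (B v).
  by move=> v k'; have [] := Hsp v k' (step v k') erefl.
have [Hx _] := Hsp _ _ _ He.
have Uk : U (x s k).
  apply: NNPP => Hn; apply: HnU => u Uu.
  have [j Hj] := HU u Uu.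
  case: (eqVneq j k) => [Ejk|Njk]; first by subst; case: Hn.
  by exists j; rewrite Hx /mut_cluster (negbTE Njk).
exists s; split => //; split => // i Hi j.
have Nik : i != k by apply/eqP => E; subst.
rewrite (@cvec_edge n B s s' k HB He) /cstep (negbTE Nik) !mxE.
have d0 : forall a b : 'I_n, (0 : int) <= delta_mx (0 : 'I_1) a 0 b.
  by move=> a b; rewrite mxE; case: (_ && _).
rewrite (@pos_npos (- _)); last by rewrite oppr_le0.
rewrite mulr0 addr0; apply: addr_ge0 => //; apply: mulr_ge0 => //; exact: pos_ge0.
Qed.
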